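(* Consider the network $\Sigma$ (with all the structural assumptions in the context), let $M\in\mathbb{N}$, and let $\mathcal{A}_i\subset\mathbb{R}^{n_i}$, $i\in\mathbb{N}$, be nonempty closed sets such that $(\mathcal{A}_i)_{i\in\mathbb{N}}$ is uniformly bounded (there is $C>0$ with $|z|\le C$ for all $i$ and all $z\in\mathcal{A}_i$). Suppose that for each $i\in\mathbb{N}$ there exist a continuous $W_i:\mathbb{R}^{n_i}\to[0,\infty)$, functions $\underline\omega_i,\overline\omega_i\in\mathcal{K}_\infty$, $\gamma_{ij}\in\mathcal{K}_\infty\cup\{0\}$ ($j\in\mathbb{N}$) and $\gamma_{iu}\in\mathcal{K}$ such that (1) $\underline\omega_i(|\xi_i|_{\mathcal{A}_i})\le W_i(\xi_i)\le\overline\omega_i(|\xi_i|_{\mathcal{A}_i})$ for all $\xi_i\in\mathbb{R}^{n_i}$; (2) $W_i(x_i(M,\xi,u))\le\max\{\sup_{j\in\mathbb{N}}\gamma_{ij}(W_j(\xi_j)),\gamma_{iu}(\|u\|_\infty)\}$ for all $\xi\in X$, $u\in\mathcal{U}$; and that these satisfy the uniformity conditions: there exist $\underline\omega,\overline\omega\in\mathcal{K}_\infty$ with $\underline\omega\le\underline\omega_i\le\overline\omega_i\le\overline\omega$ for all $i$; there exists $\alpha\in\mathcal{K}_\infty$ with $\alpha(s)<s$ for all $s>0$ and $\gamma_{ij}\le\alpha$ for all $i,j$; and there is $\bar\gamma_u\in\mathcal{K}$ with $\gamma_{iu}\le\bar\gamma_u$ for all $i$. Then $\Sigma^M$ is well-posed,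 i.e. $f^M(x,(u_0,\dots,u_{M-1}))\in X$ for all $x\in X$ and $u_0,\dots,u_{M-1}\in U$.
   Context: For each $i\in\mathbb{N}$ fix positive integers $n_i,p_i$, norms $|\cdot|$ on $\mathbb{R}^{n_i},\mathbb{R}^{p_i}$, and a finite set $I_i\subset\mathbb{N}\setminus\{i\}$ such that each set $\{j\in\mathbb{N}: i\in I_j\}$ is finite; $X(I_i)=\prod_{j\in I_i}\mathbb{R}^{n_j}$ with norm $\sup_{j\in I_i}|x_j|$; $f_i:\mathbb{R}^{n_i}\times X(I_i)\times\mathbb{R}^{p_i}\to\mathbb{R}^{n_i}$ continuous. $X_E=\prod_i\mathbb{R}^{n_i}$; $X$ (resp. $U$) the subspace of sequences $(x_i)$ with $x_i\in\mathbb{R}^{n_i}$ (resp. $(u_i)$, $u_i\in\mathbb{R}^{p_i}$) with finite norm $\sup_i|x_i|=:|x|_\infty$. $f:X_E\times U\to X_E$, $f(x,u)_i=f_i(x_i,(x_j)_{j\in I_i},u_i)$; network $\Sigma$: $x(k+1)=f(x(k),u(k))$. $\mathcal{U}$: sequences $u:\mathbb{N}_0\to U$ with $\|u\|_\infty=\sup_k|u(k)|_\infty<\infty$; for $\xi\in X_E$, $x(k,\xi,u)\in X_E$ denotes the solution with $x(0)=\xi$ and $x_i(k,\xi,u)$ its $i$-th component. Iterates: $f^1=f$, $f^{k+1}(x,(u_0,\dots,u_k))=f(f^k(x,(u_0,\dots,u_{k-1})),u_k)$. $|z|_{\mathcal{A}_i}=\inf_{y\in\mathcal{A}_i}|z-y|$.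 $\mathcal{K}$, $\mathcal{K}_\infty$ are the standard comparison classes; inequalities between functions are pointwise. *)

(* Defs.v *)
From HB Require Import structures.
From mathcomp Require Import all_boot all_order all_algebra.
From mathcomp Require Import all_classical all_reals.
Set Implicit Arguments. Unset Strict Implicit. Unset Printing Implicit Defensive.
Import Order.TTheory GRing.Theory Num.Theory.
Local Open Scope classical_set_scope.
Local Open Scope ring_scope.

Section Defs.
Variable R : realType.

Definition is_norm (m : nat) (nr : 'rV[R]_m -> R) : Prop :=
  [/\ (forall x, nr x = 0 -> x = 0),
      (forall (a : R) x, nr (a *: x) = `|a| * nr x) &
      (forall x y, nr (x + y) <= nr x + nr y)].

Definition classK (g : R -> R) : Prop :=
  [/\ g 0 = 0,
      (forall s t, 0 <= s -> s < t -> g s < g t) &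
      (forall s, 0 <= s -> forall e, 0 < e ->
         exists2 d, 0 < d & forall t, 0 <= t -> `|t - s| < d -> `|g t - g s| < e)].

Definition classKinf (g : R -> R) : Prop :=
  classK g /\ (forall c, exists2 s, 0 <= s & c < g s).

Definition closed_wrt (m : nat) (nr : 'rV[R]_m -> R) (A : set 'rV[R]_m) : Prop :=
  forall z, (forall e, 0 < e -> exists2 y, A y & nr (z - y) < e) -> A z.

Definition dist_to (m : nat) (nr : 'rV[R]_m -> R) (A : set 'rV[R]_m) (z : 'rV[R]_m) : R :=
  inf [set nr (z - y) | y in A].

Definition continuous_wrt (m : nat) (nr : 'rV[R]_m -> R) (W : 'rV[R]_m -> R) : Prop :=
  forall z e, 0 < e -> exists2 d, 0 < d & forall z', nr (z' - z) < d -> `|W z' - W z| < e.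

Definition Xloc (n : nat -> nat) (I : nat -> seq nat) (i : nat) : Type :=
  forall j : seq_sub (I i), 'rV[R]_(n (val j)).

Definition cont_fi (n p : nat -> nat) (I : nat -> seq nat)
  (nx : forall i, 'rV[R]_(n i) -> R) (nu : forall i, 'rV[R]_(p i) -> R)
  (fi : forall i, 'rV[R]_(n i) -> Xloc n I i -> 'rV[R]_(p i) -> 'rV[R]_(n i)) (i : nat) : Prop :=
  forall x w v e, 0 < e -> exists2 d, 0 < d & forall x' w' v',
    nx i (x' - x) < d -> (forall j, nx (val j) (w' j - w j) < d) -> nu i (v' - v) < d ->
    nx i (fi i x' w' v' - fi i x w v) < e.

Definition netf (n p : nat -> nat) (I : nat -> seq nat)
  (fi : forall i, 'rV[R]_(n i) -> Xloc n I i -> 'rV[R]_(p i) -> 'rV[R]_(n i))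
  (x : forall i, 'rV[R]_(n i)) (u : forall i, 'rV[R]_(p i)) : forall i, 'rV[R]_(n i) :=
  fun i => fi i (x i) (fun j => x (val j)) (u i).

(* f^k(x, (u_0,...,u_{k-1})); also the solution x(k, x, u) *)
Fixpoint fiter (n p : nat -> nat) (I : nat -> seq nat)
  (fi : forall i, 'rV[R]_(n i) -> Xloc n I i -> 'rV[R]_(p i) -> 'rV[R]_(n i))
  (k : nat) (x : forall i, 'rV[R]_(n i)) (us : nat -> forall i, 'rV[R]_(p i)) :
  forall i, 'rV[R]_(n i) :=
  match k with
  | 0 => x
  | k'.+1 => netf fi (fiter fi k' x us) (us k')
  end.

Definition in_linf (m : nat -> nat) (nr : forall i, 'rV[R]_(m i) -> R)
  (x : forall i, 'rV[R]_(m i)) : Prop :=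
  exists C, forall i, nr i (x i) <= C.

Definition linf_norm (m : nat -> nat) (nr : forall i, 'rV[R]_(m i) -> R)
  (x : forall i, 'rV[R]_(m i)) : R :=
  sup (range (fun i => nr i (x i))).

Definition in_calU (m : nat -> nat) (nr : forall i, 'rV[R]_(m i) -> R)
  (u : nat -> forall i, 'rV[R]_(m i)) : Prop :=
  exists C, forall k i, nr i (u k i) <= C.

Definition calU_norm (m : nat -> nat) (nr : forall i, 'rV[R]_(m i) -> R)
  (u : nat -> forall i, 'rV[R]_(m i)) : R :=
  sup (range (fun k => linf_norm nr (u k))).

End Defs.

(* Main.v *)
Require Import Defs.
From HB Require Import structures.
From mathcomp Require Import all_boot all_order all_algebra.
From mathcomp Require Import all_classical all_reals.
Import Order.TTheory GRing.Theory Num.Theory.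
Local Open Scope classical_set_scope.
Local Open Scope ring_scope.

Set Implicit Arguments.
Section Aux.
Variable R : realType.

Lemma norm0 m (nr : 'rV[R]_m -> R) : is_norm nr -> nr 0 = 0.
Proof. case=> _ hz _; by rewrite -(scale0r (0 : 'rV[R]_m)) hz normr0 mul0r. Qed.

Lemma normN m (nr : 'rV[R]_m -> R) x : is_norm nr -> nr (- x) = nr x.
Proof. case=> _ hz _; by rewrite -scaleN1r hz normrN normr1 mul1r. Qed.

Lemma norm_ge0 m (nr : 'rV[R]_m -> R) x : is_norm nr -> 0 <= nr x.
Proof.
move=> h; have := h; case=> _ _ ht.
have := ht x (- x); rewrite subrr norm0 // normN // => H.
have : 0 <= nr x *+ 2 by rewrite mulr2n.
by rewrite pmulrn_lge0.
Qed.

Lemma normB_le m (nr : 'rV[R]_m -> R) z y : is_norm nr -> nr z <= nr (z - y) + nr y.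
Proof. case=> _ _ ht; by have := ht (z - y) y; rewrite subrK. Qed.

Lemma classK_le (g : R -> R) s t : classK g -> 0 <= s -> s <= t -> g s <= g t.
Proof.
case=> _ hi _ hs; rewrite le_eqVlt => /orP [/eqP -> //|st].
by apply/ltW/hi.
Qed.

Lemma dist_ge0 m (nr : 'rV[R]_m -> R) A z : is_norm nr -> A !=set0 -> 0 <= dist_to nr A z.
Proof.
move=> hn [a Aa]; apply: lb_le_inf.
  by exists (nr (z - a)); exists a.
by move=> _ [y _ <-]; apply: norm_ge0.
Qed.

Lemma dist_le m (nr : 'rV[R]_m -> R) (A : set 'rV[R]_m) z y : is_norm nr -> A y -> dist_to nr A z <= nr (z - y).
Proof.
move=> hn Ay; apply: ge_inf; last by exists y.
by exists 0 => _ [y' _ <-]; apply: norm_ge0.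
Qed.

Lemma fiter_loc n p I fi k x (us us' : nat -> forall i, 'rV[R]_(p i)) :
  (forall j, (j < k)%N -> us j = us' j) -> @fiter R n p I fi k x us = fiter fi k x us'.
Proof.
elim: k => [//|k IH] H /=.
by rewrite IH ?H // => j jk; apply: H; apply: ltnW.
Qed.

Lemma bound_fin (p : nat -> nat) (nu : forall i, 'rV[R]_(p i) -> R) (us : nat -> forall i, 'rV[R]_(p i)) m :
  (forall k, (k < m)%N -> in_linf nu (us k)) ->
  exists2 C, 0 <= C & forall k, (k < m)%N -> forall i, nu i (us k i) <= C.
Proof.
elim: m => [|m IH] H; first by exists 0 => //.
have [C C0 HC] := IH (fun k km => H k (ltnW km)).
have [D HD] := H m (ltnSn m).
exists (Num.max C D); first by rewrite le_max C0.
move=> k; rewrite ltnS leq_eqVlt => /orP [/eqP -> | km] i.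
  by rewrite le_max HD orbT.
by rewrite le_max HC.
Qed.

End Aux.
Unset Implicit Arguments.
Theorem theorem1 (R : realType) (n p : nat -> nat)
  (nx : forall i, 'rV[R]_(n i) -> R) (nu : forall i, 'rV[R]_(p i) -> R)
  (I : nat -> seq nat)
  (fi : forall i, 'rV[R]_(n i) -> Xloc R n I i -> 'rV[R]_(p i) -> 'rV[R]_(n i))
  (hn : forall i, (0 < n i)%N) (hp : forall i, (0 < p i)%N)
  (hnx : forall i, is_norm (nx i)) (hnu : forall i, is_norm (nu i))
  (hI : forall i, i \notin I i)
  (hIfin : forall i, exists N, forall j, i \in I j -> (j < N)%N)
  (hfc : forall i, cont_fi nx nu fi i)
  (M : nat) (hM : (0 < M)%N)
  (A : forall i, set 'rV[R]_(n i))
  (hA0 : forall i, A i !=set0)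
  (hAc : forall i, closed_wrt (nx i) (A i))
  (hAb : exists2 C : R, 0 < C & forall i z, A i z -> nx i z <= C)
  (W : forall i, 'rV[R]_(n i) -> R)
  (wl wu : nat -> R -> R) (gam : nat -> nat -> R -> R) (gu : nat -> R -> R)
  (hW : forall i, (forall z, 0 <= W i z) /\ continuous_wrt (nx i) (W i))
  (hwl : forall i, classKinf (wl i)) (hwu : forall i, classKinf (wu i))
  (hgam : forall i j, classKinf (gam i j) \/ (forall s, 0 <= s -> gam i j s = 0))
  (hgu : forall i, classK (gu i))
  (h1 : forall i z, wl i (dist_to (nx i) (A i) z) <= W i z
                    /\ W i z <= wu i (dist_to (nx i) (A i) z))
  (h2 : forall i (xi : forall j, 'rV[R]_(n j)) (u : nat -> forall j, 'rV[R]_(p j)),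
          in_linf nx xi -> in_calU nu u ->
          forall c : R, (forall j, gam i j (W j (xi j)) <= c) ->
                        gu i (calU_norm nu u) <= c ->
                        W i (fiter fi M xi u i) <= c)
  (hunif1 : exists wl0 wu0, [/\ classKinf wl0, classKinf wu0 &
              forall i s, 0 <= s -> wl0 s <= wl i s /\ wl i s <= wu i s /\ wu i s <= wu0 s])
  (hunif2 : exists al, [/\ classKinf al, (forall s, 0 < s -> al s < s) &
              forall i j s, 0 <= s -> gam i j s <= al s])
  (hunif3 : exists gb, classK gb /\ forall i s, 0 <= s -> gu i s <= gb s) :
  forall (x : forall i, 'rV[R]_(n i)) (us : nat -> forall i, 'rV[R]_(p i)),
    in_linf nx x -> (forall k, (k < M)%N -> in_linf nu (us k)) ->
    in_linf nx (fiter fi M x us).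
Proof.
move=> x us hx hus.
have [Bx HBx] := hx.
have [C C0 HC] := hAb.
have [wl0 [wu0 [Hwl0 Hwu0 Hw]]] := hunif1.
have [al [Hal Hals Hgal]] := hunif2.
have [gb [Hgb Hgbu]] := hunif3.
have [Cu Cu0 HCu] := @bound_fin R p nu us M hus.
pose u := fun k => if (k < M)%N then us k else (fun i => (0 : 'rV[R]_(p i))).
have Hu : forall k i, nu i (u k i) <= Cu.
  move=> k i; rewrite /u; case: ifP => kM; first exact: HCu.
  by rewrite norm0.
have hu : in_calU nu u by exists Cu.
have eq : fiter fi M x u = fiter fi M x us.
  by apply: fiter_loc => j jM; rewrite /u jM.
pose K := wu0 (Bx + C).
have Kw : forall j, W j (x j) <= K.
  move=> j; have [a Aa] := hA0 j.
  have d0 := @dist_ge0 _ _ _ _ (x j) (hnx j) (hA0 j).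
  have dl := @dist_le _ _ _ _ (x j) _ (hnx j) Aa.
  apply: le_trans (proj2 (h1 j (x j))) _.
  have [_ [_ H3]] := Hw j _ d0.
  apply: le_trans H3 _; apply: classK_le => //; first by case: Hwu0.
  apply: le_trans dl _.
  have [_ _ ht] := hnx j.
  apply: le_trans (ht _ _) _; rewrite normN //.
  by apply: lerD => //; apply: HC.
have lin0 : forall k, 0 <= linf_norm nu (u k) /\ linf_norm nu (u k) <= Cu.
  move=> k; split.
    apply: le_trans (@norm_ge0 _ _ _ (u k 0%N) (hnu 0%N)) _.
    apply: ub_le_sup; last by exists 0%N.
    by exists Cu => _ [i _ <-].
  apply: ge_sup; first by exists (nu 0%N (u k 0%N)); exists 0%N.
  by move=> _ [i _ <-].
have cn0 : 0 <= calU_norm nu u.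
  apply: le_trans (proj1 (lin0 0%N)) _.
  apply: ub_le_sup; last by exists 0%N.
  by exists Cu => _ [k _ <-]; case: (lin0 k).
pose c := Num.max (al K) (gb (calU_norm nu u)).
have Wc : forall i, W i (fiter fi M x us i) <= c.
  move=> i; rewrite -eq; apply: h2 => //.
    move=> j; apply: le_trans (Hgal i j _ (proj1 (hW j) _)) _.
    rewrite le_max; apply/orP; left.
    apply: classK_le => //; first by case: Hal.
    exact: (proj1 (hW j)).
  by apply: le_trans (Hgbu i _ cn0) _; rewrite le_max lexx orbT.
have [s s0 cs] := proj2 Hwl0 c.
exists (s + C) => i.
set z := fiter fi M x us i.
have d0 := @dist_ge0 _ _ _ _ z (hnx i) (hA0 i).
have ds : dist_to (nx i) (A i) z < s.
  rewrite ltNge; apply/negP => sd.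
  have : wl0 s <= c.
    have HH := classK_le _ _ (proj1 Hwl0) s0 sd.
    apply: le_trans HH _.
    have [H1 _] := Hw i _ d0.
    apply: le_trans H1 _.
    apply: le_trans (proj1 (h1 i z)) _.
    exact: Wc.
  by rewrite leNgt cs.
have [a Aa] := hA0 i.
have [_ [y Ay <-] ys] := inf_lt (ex_intro _ (nx i (z - a)) (ex_intro2 _ _ a Aa erefl)) ds.
apply: le_trans (@normB_le _ _ _ _ y (hnx i)) _.
by apply: lerD; [apply: ltW | apply: HC].
Qed.
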